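(* Let $0<\nu\le1$ and $\tilde f(\xi)=\sum_{j\ge0}(j!)^{-1/\nu}|\xi|^j$ for $\xi\in\mathbb{R}^n$. Then for $\xi,\eta\in\mathbb{R}^n$: (A.9) $\tilde f(\xi)\le\tilde f(\xi-\eta)\tilde f(\eta)$ for all $\xi,\eta$; (A.10) $\tilde f(\xi)\le\tilde f(\xi-\eta)\exp(|\eta|^\nu)$ for $|\xi|\wedge|\eta|\le|\xi-\eta|$; (A.11) $(\tilde f(\eta)-\tilde f(\xi))|\eta|^{1-\nu}\le|\xi-\eta|\tilde f(\eta)$ for $|\xi|\le|\eta|$; (A.12) $|\tilde f(\xi)-\tilde f(\eta)||\eta|^{1-\nu}\le|\xi-\eta|^{1-\nu}\tilde f(\xi-\eta)\tilde f(\eta)$ for all $\xi,\eta$; (A.13) $|\tilde f(\xi)-\tilde f(\eta)||\eta|^{1-\nu}\le|\xi-\eta|^{1-\nu}(\exp(|\xi-\eta|^\nu)-1)\tilde f(\eta)$ for $|\xi|\wedge|\xi-\eta|\le|\eta|$; (A.14) $|\tilde f(\xi)-\tilde f(\eta)||\eta|^{1-\nu}\le C|\xi-\eta|^{1-\nu}(\tilde f(\xi-\eta)-1)\exp(|\eta|^\nu)$ for $|\xi|\wedge|\eta|\le|\xi-\eta|$, where one can take $C=1$ except in the region $|\xi|\le|\xi-\eta|\le|\eta|$, where $C=2^{1-\nu}$. Moreover, the function $\xi\mapsto\tilde f(\xi)\vee\tilde f(1)$ satisfies the same estimates (A.9)–(A.14) as $\tilde f$ (with $\tilde f$ replaced by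 it throughout).
   Context: $a\vee b=\max(a,b)$, $a\wedge b=\min(a,b)$; $\tilde f(1)$ denotes the value at $|\xi|=1$. *)

(* Defs.v *)
From HB Require Import structures.
From mathcomp Require Import all_boot all_order all_algebra.
From mathcomp Require Import all_classical all_reals all_analysis.
Set Implicit Arguments. Unset Strict Implicit. Unset Printing Implicit Defensive.
Import Order.TTheory GRing.Theory Num.Theory numFieldNormedType.Exports.
Local Open Scope ring_scope.

Definition enorm (R : realType) (n : nat) (x : 'rV[R]_n) : R :=
  Num.sqrt (\sum_(i < n) x ord0 i ^+ 2).

Definition ftil (R : realType) (nu : R) (r : R) : R :=
  limn (series (fun j : nat => (j`!)%:R `^ (- (1 / nu)) * r ^+ j)).

Definition ftilde (R : realType) (n : nat) (nu : R) (xi : 'rV[R]_n) : R :=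
  ftil nu (enorm xi).

Definition estimates_A (R : realType) (n : nat) (nu : R)
  (F : 'rV[R]_n -> R) : Prop :=
  forall xi eta : 'rV[R]_n,
  let a := enorm xi in let b := enorm eta in let d := enorm (xi - eta) in
  (F xi <= F (xi - eta) * F eta) /\
  (Num.min a b <= d -> F xi <= F (xi - eta) * expR (b `^ nu)) /\
  (a <= b -> (F eta - F xi) * b `^ (1 - nu) <= d * F eta) /\
  (`|F xi - F eta| * b `^ (1 - nu) <= d `^ (1 - nu) * F (xi - eta) * F eta) /\
  (Num.min a d <= b ->
     `|F xi - F eta| * b `^ (1 - nu) <= d `^ (1 - nu) * (expR (d `^ nu) - 1) * F eta) /\
  (Num.min a b <= d ->
     let C := if (a <= d) && (d <= b) then 2 `^ (1 - nu) else 1 in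
     `|F xi - F eta| * b `^ (1 - nu)
       <= C * d `^ (1 - nu) * (F (xi - eta) - 1) * expR (b `^ nu)).

(* Main.v *)
Require Import Defs.
From HB Require Import structures.
From mathcomp Require Import all_boot all_order all_algebra.
From mathcomp Require Import all_classical all_reals all_analysis.
From mathcomp Require Import ring lra.
Import Order.TTheory GRing.Theory Num.Theory numFieldNormedType.Exports.
Local Open Scope ring_scope.
Set Implicit Arguments. Unset Strict Implicit. Unset Printing Implicit Defensive.
Local Open Scope classical_set_scope.
Local Open Scope ring_scope.
Section Aux.
Variable R : realType.
Lemma tri_sum (G : nat -> nat -> R) N :
  \sum_(0 <= j < N) \sum_(0 <= i < j.+1) G i (j - i)%N =
  \sum_(0 <= i < N) \sum_(0 <= q < N - i) G i q.
Proof.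
elim: N => [|N IH]; first by rewrite !big_geq.
rewrite big_nat_recr //= IH.
rewrite [in RHS]big_nat_recr //=.
rewrite subSnn big_nat1.
rewrite [X in _ + X = _]big_nat_recr //= subnn.
under [in RHS]eq_big_nat => i /andP[_ hi].
  rewrite subSn ?(ltnW hi)// big_nat_recr//=.
over.
rewrite big_split /= !addrA.
by [].
Qed.
Lemma sum_shift_le (u : nat -> R) k a M : (forall m, 0 <= u m) ->
  \sum_(a <= q < M) u (q + k)%N <= \sum_(a <= m < M + k) u m.
Proof.
move=> u0; have [aM|Ma] := leqP a M; last by rewrite big_geq ?sumr_ge0// ltnW.
have -> : \sum_(a <= q < M) u (q + k)%N = \sum_(a + k <= m < M + k) u m.
  by rewrite big_addn addnK.
rewrite [leRHS](@big_cat_nat _ _ _ (a + k))//= ?leq_addr ?leq_add2r//.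
by rewrite lerDr sumr_ge0.
Qed.
Lemma ser_le_lim (u : nat -> R) N : (forall m, 0 <= u m) -> cvgn (series u) ->
  series u N <= limn (series u).
Proof.
move=> u0 cu; apply: nondecreasing_cvgn_le => //.
exact: nondecreasing_series.
Qed.

Lemma lim_le_of (f : nat -> R) X : cvgn f -> (forall N, f N <= X) -> limn f <= X.
Proof. by move=> cf fX; apply: limr_le => //; near=> N; apply: fX. Unshelve. all: end_near. Qed.
End Aux.
Section G.
Variable R : realType.
Variable nu : R.
Hypothesis nu0 : 0 < nu.
Hypothesis nu1 : nu <= 1.

Definition cc (j : nat) : R := (j`!)%:R `^ (- (1 / nu)).
Definition Lf (k : nat) : R := ln (k`!)%:R.
Definition tm (r : R) (j : nat) := cc j * r ^+ j.
Definition gg r := limn (series (tm r)).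

Lemma fact_pos k : 0 < (k`!)%:R :> R.
Proof. by rewrite ltr0n fact_gt0. Qed.

Lemma factE k : (k`!)%:R = expR (Lf k) :> R.
Proof. by rewrite /Lf lnK// posrE fact_pos. Qed.

Lemma ccE j : cc j = expR (- (1 / nu) * Lf j).
Proof. by rewrite /cc /powR gt_eqF ?fact_pos. Qed.

Lemma cc_gt0 j : 0 < cc j.
Proof. by rewrite ccE expR_gt0. Qed.

Lemma powE (x : R) k : 0 < x -> x ^+ k = expR (k%:R * ln x).
Proof. by move=> x0; rewrite expRM_natl lnK. Qed.

Lemma Lf_ge0 k : 0 <= Lf k.
Proof. by rewrite /Lf ln_ge0// ler1n fact_gt0. Qed.

Lemma fact_mul_le i q : (i`! * q`! <= (i + q)`!)%N.
Proof.
have := bin_fact (leq_addr q i); rewrite addKn => <-.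
by rewrite leq_pmull // bin_gt0 leq_addr.
Qed.

Lemma Lf_add i q : Lf i + Lf q <= Lf (i + q).
Proof.
rewrite /Lf -lnM ?posrE ?fact_pos// ler_ln ?posrE ?mulr_gt0 ?fact_pos//.
by rewrite -natrM ler_nat fact_mul_le.
Qed.

Lemma binE i q : ('C(i + q, i))%:R = expR (Lf (i + q) - Lf i - Lf q) :> R.
Proof.
have h := bin_fact (leq_addr q i); rewrite addKn in h.
rewrite -addrA -opprD expRD expRN expRD -!factE -h !natrM mulfK // mulf_neq0 // gt_eqF // fact_pos.
Qed.

Lemma inv_nu_ge1 : 1 <= 1 / nu.
Proof. by rewrite div1r invf_ge1. Qed.

Lemma cc_le j : cc j <= ((j`!)%:R)^-1.
Proof.
rewrite ccE factE -expRN ler_expR mulNr lerN2.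
by rewrite ler_peMl ?Lf_ge0 ?inv_nu_ge1.
Qed.

Lemma tm_ge0 r j : 0 <= r -> 0 <= tm r j.
Proof. by move=> r0; apply: mulr_ge0; [exact: ltW (cc_gt0 _) | exact: exprn_ge0]. Qed.

Lemma cvg_tm r : 0 <= r -> cvgn (series (tm r)).
Proof.
move=> r0; apply: (@series_le_cvg _ _ (exp_coeff r)).
- by move=> j; exact: tm_ge0.
- by move=> j; rewrite /exp_coeff /= divr_ge0 ?exprn_ge0.
- move=> j; rewrite /exp_coeff /= /tm mulrC ler_wpM2l ?exprn_ge0 //.
  exact: cc_le.
exact: is_cvg_series_exp_coeff.
Qed.

Lemma lim_diff_le (f h : nat -> R) K X : cvgn f -> cvgn h ->
  (forall N, (f N - h N) * K <= X) -> (limn f - limn h) * K <= X.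
Proof.
move=> cf ch H.
have c : (fun N => (f N - h N) * K) @ \oo --> (limn f - limn h) * K.
  by apply: cvgMl; apply: cvgB.
by apply: (cvgr_to_le c); near=> N; apply: H.
Unshelve. all: end_near. Qed.

Lemma S_le_gg r N : 0 <= r -> series (tm r) N <= gg r.
Proof. by move=> r0; apply: ser_le_lim; [move=> m; exact: tm_ge0|exact: cvg_tm]. Qed.

Lemma gg_le r X : 0 <= r -> (forall N, series (tm r) N <= X) -> gg r <= X.
Proof. by move=> r0 H; apply: lim_le_of => //; exact: cvg_tm. Qed.

Lemma cc0 : cc 0 = 1.
Proof. by rewrite /cc fact0 powR1. Qed.
Lemma cc1 : cc 1 = 1.
Proof. by rewrite /cc powR1. Qed.

Lemma tm0 r : tm r 0 = 1.
Proof. by rewrite /tm cc0 expr0 mulr1. Qed.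

Lemma gg_mono r s : 0 <= r -> r <= s -> gg r <= gg s.
Proof.
move=> r0 rs; have s0 := le_trans r0 rs; apply: gg_le => // N.
apply: le_trans (S_le_gg N s0); apply: ler_sum => j _.
rewrite /tm ler_wpM2l ?(ltW (cc_gt0 _))//.
by apply: (@lerXn2r _ j r s); rewrite ?nnegrE.
Qed.

Lemma gg_ge1D r : 0 <= r -> 1 + r <= gg r.
Proof.
move=> r0; apply: le_trans (S_le_gg 2 r0).
by rewrite /series /= big_nat_recr//= big_nat1 tm0 /tm cc1 mul1r expr1.
Qed.

Lemma gg_ge1 r : 0 <= r -> 1 <= gg r.
Proof. by move=> r0; apply: le_trans (gg_ge1D r0); rewrite lerDl. Qed.

Lemma gg0 : gg 0 = 1.
Proof.
apply/eqP; rewrite eq_le gg_ge1// andbT; apply: gg_le => // N.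
case: N => [|N]; first by rewrite /series /= big_geq.
rewrite /series /= big_ltn// tm0 big_nat_cond big1 ?addr0// => j /andP[/andP[j1 _] _].
by rewrite /tm expr0n gtn_eqF// mulr0.
Qed.

Lemma gg_ge0 r : 0 <= r -> 0 <= gg r.
Proof. by move=> r0; apply: le_trans (gg_ge1 r0). Qed.

Lemma expS_le (x : R) N : 0 <= x -> \sum_(0 <= i < N) x ^+ i / (i`!)%:R <= expR x.
Proof.
move=> x0; rewrite /expR.
have := @ser_le_lim R (exp_coeff x) N.
apply.
- by move=> m; rewrite /exp_coeff /= divr_ge0 ?exprn_ge0.
- exact: is_cvg_series_exp_coeff.
Qed.

Lemma expS1_le (x : R) N : 0 <= x -> \sum_(1 <= i < N) x ^+ i / (i`!)%:R <= expR x - 1.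
Proof.
move=> x0; case: N => [|N].
  by rewrite big_geq// subr_ge0 -expR0 ler_expR.
rewrite lerBrDl; apply: le_trans (expS_le N.+2 x0).
rewrite [leRHS]big_ltn// expr0 fact0 divr1 lerD2l.
rewrite [leRHS](@big_cat_nat _ _ _ N.+1)//= lerDl sumr_ge0// => i _.
by rewrite divr_ge0 ?exprn_ge0.
Qed.

Lemma conv_exp (x y : R) :
  expR (nu * x + (1 - nu) * y) <= nu * expR x + (1 - nu) * expR y.
Proof.
set m := nu * x + (1 - nu) * y.
have ex : expR x = expR m * expR (x - m) by rewrite -expRD addrC subrK.
have ey : expR y = expR m * expR (y - m) by rewrite -expRD addrC subrK.
have h1 := expR_ge1Dx (x - m); have h2 := expR_ge1Dx (y - m).
have nu1' : 0 <= 1 - nu by rewrite subr_ge0.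
have k1 : nu * (1 + (x - m)) <= nu * expR (x - m) by rewrite ler_wpM2l// ltW.
have k2 : (1 - nu) * (1 + (y - m)) <= (1 - nu) * expR (y - m) by rewrite ler_wpM2l.
have k3 : 1 <= nu * expR (x - m) + (1 - nu) * expR (y - m).
  apply: le_trans (lerD k1 k2); rewrite /m; lra.
rewrite ex ey mulrCA [X in _ + X]mulrCA -mulrDr.
by rewrite ler_peMr ?expR_gt0.
Qed.

Lemma tri3 (r : R) : 0 < r -> r`^nu = expR (nu * ln r).
Proof. by move=> r0; rewrite /powR gt_eqF. Qed.

Lemma nu_neq0 : nu != 0. Proof. by rewrite gt_eqF. Qed.

Ltac lin_close D :=
  rewrite -subr_ge0;
  match goal with |- is_true (0 <= ?X) =>
    have -> : X = D by rewrite ?natrD; field; exact: nu_neq0 end.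

Definition TT (r s : R) i q := cc (i + q) * ((r ^+ q * s ^+ i) *+ 'C(i + q, i)).

Lemma expand r s N : series (tm (r + s)) N =
  \sum_(0 <= i < N) \sum_(0 <= q < N - i) TT r s i q.
Proof.
rewrite /series /= -tri_sum; apply: eq_bigr => j _.
rewrite /tm exprDn big_mkord mulr_sumr; apply: eq_bigr => i _.
by rewrite /TT subnKC // -ltnS.
Qed.

Lemma tmE r j : 0 < r -> tm r j = expR (- (1 / nu) * Lf j + j%:R * ln r).
Proof. by move=> r0; rewrite /tm ccE powE// -expRD. Qed.

Lemma TTE r s i q : 0 < r -> 0 < s -> TT r s i q =
  expR (- (1 / nu) * Lf (i + q) + (Lf (i + q) - Lf i - Lf q) + q%:R * ln r + i%:R * ln s).
Proof.
move=> r0 s0; rewrite /TT -mulr_natr binE ccE !powE// -!expRD.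
by congr expR; ring.
Qed.

Lemma Lf_add' i q : 0 <= Lf (i + q) - Lf i - Lf q.
Proof. by rewrite -addrA -opprD subr_ge0 Lf_add. Qed.

Lemma B9 r s i q : 0 < r -> 0 < s -> TT r s i q <= tm s i * tm r q.
Proof.
move=> r0 s0; rewrite TTE// !tmE// -expRD ler_expR.
lin_close ((1 / nu - 1) * (Lf (i + q) - Lf i - Lf q)).
by rewrite mulr_ge0 ?Lf_add'// subr_ge0 inv_nu_ge1.
Qed.

Lemma B10 r s i q : 0 < s -> s <= r ->
  TT r s i q <= (s `^ nu) ^+ i / (i`!)%:R * (nu * tm r q + (1 - nu) * tm r (i + q)).
Proof.
move=> s0 sr; have r0 := lt_le_trans s0 sr.
have hl : ln s <= ln r by rewrite ler_ln ?posrE.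
rewrite !tmE//.
apply: le_trans (ler_wpM2l _ (conv_exp _ _)); last first.
  by rewrite divr_ge0 ?exprn_ge0 ?powR_ge0.
rewrite TTE// tri3// -expRM_natl factE -expRN -!expRD ler_expR.
lin_close (i%:R * (1 - nu) * (ln r - ln s)).
by rewrite !mulr_ge0 ?subr_ge0.
Qed.

Lemma powRE (x a : R) : 0 < x -> x `^ a = expR (a * ln x).
Proof. by move=> x0; rewrite /powR gt_eqF. Qed.

Ltac lin_close2 D :=
  rewrite -subr_ge0;
  match goal with |- is_true (0 <= ?X) =>
    have -> : X = D by rewrite ?natrD ?mulrS; field; exact: nu_neq0 end.

Lemma B13 r s i q : 0 < s -> s <= r ->
  r `^ (1 - nu) * TT r s i.+1 q <= s `^ (1 - nu) *
   ((s `^ nu) ^+ i.+1 / (i.+1`!)%:R * (nu * tm r q + (1 - nu) * tm r (i.+1 + q))).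
Proof.
move=> s0 sr; have r0 := lt_le_trans s0 sr.
have hl : ln s <= ln r by rewrite ler_ln ?posrE.
rewrite !tmE//.
apply: le_trans (ler_wpM2l (powR_ge0 _ _) (ler_wpM2l _ (conv_exp _ _))); last first.
  by rewrite divr_ge0 ?exprn_ge0 ?powR_ge0.
rewrite TTE// !powRE// -expRM_natl factE -expRN -!expRD ler_expR.
lin_close2 (i%:R * (1 - nu) * (ln r - ln s)).
by rewrite !mulr_ge0 ?subr_ge0.
Qed.

Lemma B12 r s i q : 0 < r -> 0 < s ->
  r `^ (1 - nu) * TT r s i.+1 q <= s `^ (1 - nu) *
   (nu * (tm s i.+1 * tm r q) + (1 - nu) * (tm s i * tm r q.+1)).
Proof.
move=> r0 s0; rewrite !tmE// -!expRD.
apply: le_trans (ler_wpM2l (powR_ge0 _ _) (conv_exp _ _)).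
rewrite TTE// !powRE// -!expRD ler_expR addSnnS.
lin_close2 ((1 - nu) / nu * (Lf (i + q.+1) - Lf i - Lf q.+1)).
apply: mulr_ge0; last exact: Lf_add'.
by apply: divr_ge0; [rewrite subr_ge0 | exact: ltW].
Qed.

Lemma B11 b q : 0 < b ->
  b `^ (1 - nu) * (cc q.+1 * (q.+1)%:R * b ^+ q) <= nu * tm b q + (1 - nu) * tm b q.+1.
Proof.
move=> b0.
have e : Lf q.+1 = ln (q.+1)%:R + Lf q.
  by rewrite /Lf factS natrM lnM ?posrE ?ltr0n ?fact_gt0.
have -> : cc q.+1 * (q.+1)%:R * b ^+ q = cc q.+1 * expR (ln (q.+1)%:R) * b ^+ q.
  by rewrite lnK ?posrE ?ltr0n.
rewrite !tmE//; apply: le_trans (conv_exp _ _).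
rewrite ccE powE// powRE// -!expRD ler_expR e.
lin_close2 (0 : R).
by [].
Qed.

Lemma S_le_gg' r M : 0 <= r -> \sum_(0 <= q < M) tm r q <= gg r.
Proof. exact: S_le_gg. Qed.

Lemma shift_le_gg r k M : 0 <= r -> \sum_(0 <= q < M) tm r (k + q) <= gg r.
Proof.
move=> r0; under eq_bigr do rewrite addnC.
apply: le_trans (sum_shift_le _ _ _ _) (S_le_gg' _ r0) => m; exact: tm_ge0.
Qed.

Lemma sum1_le r K : 0 <= r -> \sum_(1 <= m < K) tm r m <= gg r - 1.
Proof.
move=> r0; case: K => [|K]; first by rewrite big_geq// subr_ge0 gg_ge1.
rewrite lerBrDl -{1}(tm0 r) -big_ltn//; exact: S_le_gg'.
Qed.

Lemma shift1_le_gg r k M : 0 <= r -> \sum_(1 <= q < M) tm r (k + q) <= gg r - 1.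
Proof.
move=> r0; under eq_bigr do rewrite addnC.
apply: le_trans (sum_shift_le _ _ _ _) (sum1_le _ r0) => m; exact: tm_ge0.
Qed.

Lemma inner_le r i M : 0 <= r ->
  \sum_(0 <= q < M) (nu * tm r q + (1 - nu) * tm r (i + q)) <= gg r.
Proof.
move=> r0; rewrite big_split /= -!mulr_sumr.
have n1 : 0 <= 1 - nu by rewrite subr_ge0.
apply: le_trans (lerD (ler_wpM2l (ltW nu0) (S_le_gg' M r0))
                      (ler_wpM2l n1 (shift_le_gg i M r0))) _.
by rewrite -mulrDl addrC subrK mul1r.
Qed.

Lemma inner_le1 r i M : 0 <= r ->
  \sum_(1 <= q < M) (nu * tm r q + (1 - nu) * tm r (i + q)) <= gg r - 1.
Proof.
move=> r0; rewrite big_split /= -!mulr_sumr.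
have n1 : 0 <= 1 - nu by rewrite subr_ge0.
apply: le_trans (lerD (ler_wpM2l (ltW nu0) (sum1_le M r0))
                      (ler_wpM2l n1 (shift1_le_gg i M r0))) _.
by rewrite -mulrDl addrC subrK mul1r.
Qed.

Lemma LA9 r s : 0 < r -> 0 < s -> gg (r + s) <= gg r * gg s.
Proof.
move=> r0 s0; apply: gg_le; first exact: addr_ge0 (ltW r0) (ltW s0).
move=> N; rewrite expand.
apply: (@le_trans _ _ (\sum_(0 <= i < N) tm s i * gg r)).
  apply: ler_sum => i _.
  apply: le_trans (ler_sum _ (fun q _ => B9 i q r0 s0)) _.
  rewrite -mulr_sumr ler_wpM2l ?(tm_ge0 _ (ltW s0))//.
  exact: S_le_gg' (ltW r0).
rewrite -mulr_suml mulrC ler_wpM2l ?(gg_ge0 (ltW r0))//.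
exact: S_le_gg' (ltW s0).
Qed.

Lemma LA1 r s : 0 < r -> 0 <= s -> s <= r -> gg (r + s) <= gg r * expR (s `^ nu).
Proof.
move=> r0; rewrite le_eqVlt => /predU1P[<- _|s0 sr].
  by rewrite addr0 (powR0 nu_neq0) expR0 mulr1.
apply: gg_le; first exact: addr_ge0 (ltW r0) (ltW s0).
move=> N; rewrite expand.
apply: (@le_trans _ _ (\sum_(0 <= i < N) (s `^ nu) ^+ i / (i`!)%:R * gg r)).
  apply: ler_sum => i _.
  apply: le_trans (ler_sum _ (fun q _ => B10 i q s0 sr)) _.
  rewrite -mulr_sumr ler_wpM2l ?divr_ge0 ?exprn_ge0 ?powR_ge0//.
  exact: inner_le (ltW r0).
rewrite -mulr_suml mulrC ler_wpM2l ?(gg_ge0 (ltW r0))//.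
exact: expS_le (powR_ge0 _ _).
Qed.

Lemma LA2 r s : 0 < r -> 0 <= s -> s <= r ->
  gg (r + s) - gg s <= (gg r - 1) * expR (s `^ nu).
Proof.
move=> r0; rewrite le_eqVlt => /predU1P[<- _|s0 sr].
  by rewrite addr0 gg0 (powR0 nu_neq0) expR0 mulr1.
have rs0 : 0 <= r + s by exact: addr_ge0 (ltW r0) (ltW s0).
rewrite -[X in X <= _]mulr1.
apply: lim_diff_le; [exact: cvg_tm | exact: cvg_tm (ltW s0) |] => N.
rewrite mulr1 expand.
have -> : series (tm s) N = \sum_(0 <= i < N) TT r s i 0.
  rewrite /series /=; apply: eq_bigr => i _.
  by rewrite /TT addn0 binn mulr1n expr0 mul1r.
rewrite -sumrB.
apply: (@le_trans _ _ (\sum_(0 <= i < N) (s `^ nu) ^+ i / (i`!)%:R * (gg r - 1))).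
  rewrite big_nat_cond [leRHS]big_nat_cond; apply: ler_sum => i /andP[/andP[_ iN] _].
  rewrite big_ltn ?subn_gt0// addrC addKr.
  apply: le_trans (ler_sum _ (fun q _ => B10 i q s0 sr)) _.
  rewrite -mulr_sumr ler_wpM2l ?divr_ge0 ?exprn_ge0 ?powR_ge0//.
  exact: inner_le1 (ltW r0).
rewrite -mulr_suml mulrC ler_wpM2l ?subr_ge0 ?gg_ge1 ?(ltW r0)//.
exact: expS_le (powR_ge0 _ _).
Qed.

Lemma TT0q r s q : TT r s 0 q = tm r q.
Proof. by rewrite /TT add0n bin0 mulr1n expr0 mulr1. Qed.

Lemma split0 r s N : series (tm (r + s)) N.+1 - series (tm r) N.+1 =
  \sum_(0 <= i < N) \sum_(0 <= q < N.+1 - i.+1) TT r s i.+1 q.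
Proof.
rewrite expand.
have -> : series (tm r) N.+1 = \sum_(0 <= q < N.+1 - 0) TT r s 0 q.
  by rewrite subn0 /series /=; apply: eq_bigr => q _; rewrite TT0q.
by rewrite big_ltn// addrC addKr big_add1.
Qed.

Lemma LA13 r s : 0 < r -> 0 <= s -> s <= r ->
  (gg (r + s) - gg r) * r `^ (1 - nu) <= s `^ (1 - nu) * (expR (s `^ nu) - 1) * gg r.
Proof.
move=> r0; rewrite le_eqVlt => /predU1P[<- _|s0 sr].
  by rewrite addr0 subrr mul0r (powR0 nu_neq0) expR0 subrr mulr0 mul0r.
have rs0 : 0 <= r + s by exact: addr_ge0 (ltW r0) (ltW s0).
have E0 : 0 <= expR (s `^ nu) - 1.
  by rewrite subr_ge0 -expR0 ler_expR powR_ge0.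
apply: lim_diff_le; [exact: cvg_tm | exact: cvg_tm (ltW r0) |] => N.
case: N => [|N].
  rewrite /series /= !big_geq// subrr mul0r.
  by rewrite !mulr_ge0 ?powR_ge0 ?(gg_ge0 (ltW r0)).
rewrite split0 mulr_suml.
apply: (@le_trans _ _ (\sum_(0 <= i < N)
   s `^ (1 - nu) * ((s `^ nu) ^+ i.+1 / (i.+1`!)%:R * gg r))).
  apply: ler_sum => i _; rewrite mulr_suml.
  under eq_bigr do rewrite mulrC.
  apply: le_trans (ler_sum _ (fun q _ => B13 i q s0 sr)) _.
  rewrite -mulr_sumr ler_wpM2l ?powR_ge0// -mulr_sumr.
  rewrite ler_wpM2l ?divr_ge0 ?exprn_ge0 ?powR_ge0//.
  exact: inner_le (ltW r0).
rewrite -mulr_sumr -mulr_suml -mulrA ler_wpM2l ?powR_ge0//.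
rewrite ler_wpM2r ?(gg_ge0 (ltW r0))//.
by have := expS1_le N.+1 (powR_ge0 s nu); rewrite big_add1.
Qed.

Lemma LA12 r s : 0 < r -> 0 < s ->
  (gg (r + s) - gg r) * r `^ (1 - nu) <= s `^ (1 - nu) * gg s * gg r.
Proof.
move=> r0 s0.
have rs0 : 0 <= r + s by exact: addr_ge0 (ltW r0) (ltW s0).
have n1 : 0 <= 1 - nu by rewrite subr_ge0.
apply: lim_diff_le; [exact: cvg_tm | exact: cvg_tm (ltW r0) |] => N.
case: N => [|N].
  rewrite /series /= !big_geq// subrr mul0r.
  by rewrite !mulr_ge0 ?powR_ge0 ?(gg_ge0 (ltW r0)) ?(gg_ge0 (ltW s0)).
rewrite split0 mulr_suml.
apply: (@le_trans _ _ (\sum_(0 <= i < N)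
   s `^ (1 - nu) * ((nu * tm s i.+1 + (1 - nu) * tm s i) * gg r))).
  apply: ler_sum => i _; rewrite mulr_suml.
  under eq_bigr do rewrite mulrC.
  apply: le_trans (ler_sum _ (fun q _ => B12 i q r0 s0)) _.
  rewrite -mulr_sumr ler_wpM2l ?powR_ge0// big_split /= -!mulr_sumr.
  rewrite [leRHS]mulrDl; apply: lerD.
    rewrite mulrA; apply: ler_wpM2l; last exact: S_le_gg' (ltW r0).
    exact: mulr_ge0 (ltW nu0) (tm_ge0 _ (ltW s0)).
  rewrite mulrA; apply: ler_wpM2l; last exact: shift_le_gg 1 _ (ltW r0).
  exact: mulr_ge0 n1 (tm_ge0 _ (ltW s0)).
rewrite -mulr_sumr -mulr_suml -mulrA ler_wpM2l ?powR_ge0//.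
rewrite ler_wpM2r ?(gg_ge0 (ltW r0))// big_split /= -!mulr_sumr.
apply: le_trans (lerD (ler_wpM2l (ltW nu0) (shift_le_gg 1 N (ltW s0)))
                      (ler_wpM2l n1 (S_le_gg' N (ltW s0)))) _.
by rewrite -mulrDl addrC subrK mul1r.
Qed.

Lemma powdiff (a b : R) q : 0 <= a -> a <= b ->
  b ^+ q.+1 - a ^+ q.+1 <= (q.+1)%:R * b ^+ q * (b - a).
Proof.
move=> a0 ab; have b0 := le_trans a0 ab.
rewrite subrXX /= mulrC ler_wpM2r ?subr_ge0//.
apply: le_trans (_ : \sum_(i < q.+1) b ^+ q <= _); last first.
  by rewrite sumr_const card_ord mulr_natl.
apply: ler_sum => i _.
have hi : (i <= q)%N by rewrite -ltnS.
have -> : b ^+ q = b ^+ (q - i) * b ^+ i by rewrite -exprD subnK.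
rewrite ler_wpM2l ?exprn_ge0//.
by apply: (@lerXn2r _ i a b); rewrite ?nnegrE.
Qed.

Lemma LA11 a b : 0 <= a -> a <= b -> 0 < b ->
  (gg b - gg a) * b `^ (1 - nu) <= (b - a) * gg b.
Proof.
move=> a0 ab b0.
apply: lim_diff_le; [exact: cvg_tm (ltW b0) | exact: cvg_tm a0 |] => N.
rewrite /series /= -sumrB mulr_suml.
have ba : 0 <= b - a by rewrite subr_ge0.
case: N => [|N]; first by rewrite big_geq// mulr_ge0 ?(gg_ge0 (ltW b0)).
rewrite big_ltn// !tm0 subrr mul0r add0r big_add1 /=.
apply: (@le_trans _ _ (\sum_(0 <= q < N) (b - a) * (nu * tm b q + (1 - nu) * tm b (1 + q)))).
  apply: ler_sum => q _.
  apply: (@le_trans _ _ ((b - a) * (b `^ (1 - nu) * (cc q.+1 * (q.+1)%:R * b ^+ q)))).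
    rewrite /tm -mulrBr.
    have -> : (b - a) * (b `^ (1 - nu) * (cc q.+1 * (q.+1)%:R * b ^+ q)) =
      cc q.+1 * ((q.+1)%:R * b ^+ q * (b - a)) * b `^ (1 - nu) by ring.
    rewrite ler_wpM2r ?powR_ge0// ler_wpM2l ?(ltW (cc_gt0 _))//.
    exact: powdiff.
  by rewrite ler_wpM2l// B11.
rewrite -mulr_sumr ler_wpM2l//.
exact: inner_le (ltW b0).
Qed.

Lemma powsplit d : 0 < d -> d = d `^ nu * d `^ (1 - nu).
Proof.
move=> d0; rewrite -powRD; last by apply/implyP => _; rewrite gt_eqF.
by rewrite addrC subrK powRr1// ltW.
Qed.

Lemma pow_le1D d : 0 <= d -> d `^ nu <= 1 + d.
Proof.
move=> d0; have [d1|d1] := leP d 1.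
  apply: (@le_trans _ _ 1); last by rewrite lerDl.
  have h : d `^ nu <= 1 `^ nu.
    by apply: ge0_ler_powR; rewrite ?nnegrE ?ler01//; exact: ltW.
  by rewrite powR1 in h.
apply: (@le_trans _ _ d); last by rewrite lerDr.
by apply: ler1_powR => //; exact: ltW.
Qed.

Lemma d_le_g d : 0 <= d -> d <= d `^ (1 - nu) * gg d.
Proof.
rewrite le_eqVlt => /predU1P[<-|d0].
  by rewrite mulr_ge0 ?powR_ge0 ?gg_ge0.
rewrite {1}(powsplit d0) mulrC ler_wpM2l ?powR_ge0//.
exact: le_trans (pow_le1D (ltW d0)) (gg_ge1D (ltW d0)).
Qed.

Lemma d_le_E d : 0 <= d -> d <= d `^ (1 - nu) * (expR (d `^ nu) - 1).
Proof.
rewrite le_eqVlt => /predU1P[<-|d0].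
  by rewrite mulr_ge0 ?powR_ge0// subr_ge0 -expR0 ler_expR powR_ge0.
rewrite {1}(powsplit d0) mulrC ler_wpM2l ?powR_ge0//.
by rewrite lerBrDl expR_ge1Dx.
Qed.


Lemma E9 (a b d : R) (a0 : 0 <= a) (b0 : 0 <= b) (d0 : 0 <= d) (t1 : a <= d + b) (t2 : b <= a + d) (t3 : d <= a + b) : gg a <= gg d * gg b.
Proof.
move: b0; rewrite le_eqVlt => /predU1P[eb|bp].
  by rewrite -eb gg0 mulr1 gg_mono// -[d]addr0 eb.
move: d0; rewrite le_eqVlt => /predU1P[ed|dp].
  by rewrite -ed gg0 mul1r gg_mono// -[b]add0r ed.
exact: le_trans (gg_mono a0 t1) (LA9 dp bp).
Qed.

Lemma E10 (a b d : R) (a0 : 0 <= a) (b0 : 0 <= b) (d0 : 0 <= d) (t1 : a <= d + b) (t2 : b <= a + d) (t3 : d <= a + b) : Num.min a b <= d -> gg a <= gg d * expR (b `^ nu).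
Proof.
have ex1 : 1 <= expR (b `^ nu) by rewrite -expR0 ler_expR powR_ge0.
have [ad _|da] := leP a d.
  exact: le_trans (gg_mono a0 ad) (ler_peMr (gg_ge0 d0) ex1).
rewrite ge_min leNgt da /= => bd.
have dp : 0 < d by lra.
exact: le_trans (gg_mono a0 t1) (LA1 dp b0 bd).
Qed.

Lemma E11 (a b d : R) (a0 : 0 <= a) (b0 : 0 <= b) (d0 : 0 <= d) (t1 : a <= d + b) (t2 : b <= a + d) (t3 : d <= a + b) : a <= b -> (gg b - gg a) * b `^ (1 - nu) <= d * gg b.
Proof.
move=> ab; move: b0; rewrite le_eqVlt => /predU1P[eb|bp].
  have ea : a = 0 by lra.
  by rewrite -eb ea subrr mul0r mulr_ge0 ?gg_ge0.
apply: le_trans (LA11 a0 ab bp) _.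
by rewrite ler_wpM2r ?gg_ge0//; lra.
Qed.

Lemma le_of_eq' (x y : R) : x = y -> x <= y. Proof. by move=> ->. Qed.

Lemma E12 (a b d : R) (a0 : 0 <= a) (b0 : 0 <= b) (d0 : 0 <= d) (t1 : a <= d + b) (t2 : b <= a + d) (t3 : d <= a + b) :
  `|gg a - gg b| * b `^ (1 - nu) <= d `^ (1 - nu) * gg d * gg b.
Proof.
have [ab|ba] := leP a b.
  rewrite distrC ger0_norm; last by rewrite subr_ge0 gg_mono.
  apply: le_trans (E11 a0 b0 d0 t1 t2 t3 ab) _.
  by rewrite ler_wpM2r ?(gg_ge0 b0)// d_le_g.
have ba' : b < a by [].
rewrite ger0_norm; last by rewrite subr_ge0 gg_mono// ltW.
move: b0; rewrite le_eqVlt => /predU1P[eb|bp].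
  rewrite -eb gg0 mulr1 [leRHS]mulrC; rewrite -eb in t1.
  have h1 : gg a <= gg d by apply: gg_mono => //; lra.
  apply: ler_pM.
  - by rewrite subr_ge0 gg_ge1.
  - exact: powR_ge0.
  - lra.
  - by apply: ge0_ler_powR; rewrite ?nnegrE ?subr_ge0.
have dp : 0 < d by lra.
apply: le_trans (LA12 bp dp).
rewrite ler_wpM2r ?powR_ge0// lerD2r gg_mono//; lra.
Qed.

Lemma E13 (a b d : R) (a0 : 0 <= a) (b0 : 0 <= b) (d0 : 0 <= d) (t1 : a <= d + b) (t2 : b <= a + d) (t3 : d <= a + b) :
  Num.min a d <= b ->
  `|gg a - gg b| * b `^ (1 - nu) <= d `^ (1 - nu) * (expR (d `^ nu) - 1) * gg b.
Proof.
have [ab _|ba] := leP a b.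
  rewrite distrC ger0_norm; last by rewrite subr_ge0 gg_mono.
  apply: le_trans (E11 a0 b0 d0 t1 t2 t3 ab) _.
  by rewrite ler_wpM2r ?(gg_ge0 b0)// d_le_E.
rewrite ge_min leNgt ba /= => db.
have ba' : b < a by [].
have db' : d <= b by [].
rewrite ger0_norm; last by rewrite subr_ge0 gg_mono// ltW.
have bp : 0 < b by lra.
apply: le_trans (LA13 bp d0 db).
rewrite ler_wpM2r ?powR_ge0// lerD2r gg_mono//; lra.
Qed.

Lemma two_pow_ge1 : 1 <= 2 `^ (1 - nu) :> R.
Proof.
apply: (@le_trans _ _ (2 `^ 0)); first by rewrite powRr0.
by apply: ler_powR; [rewrite ler1n | rewrite subr_ge0].
Qed.

Lemma E14 (a b d : R) (a0 : 0 <= a) (b0 : 0 <= b) (d0 : 0 <= d) (t1 : a <= d + b) (t2 : b <= a + d) (t3 : d <= a + b) :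
  Num.min a b <= d ->
  let C := if (a <= d) && (d <= b) then 2 `^ (1 - nu) else 1 in
  `|gg a - gg b| * b `^ (1 - nu) <= C * d `^ (1 - nu) * (gg d - 1) * expR (b `^ nu).
Proof.
move=> hm; cbv zeta; set C := (if _ then _ else _).
have E1 : 1 <= expR (b `^ nu) by rewrite -expR0 ler_expR powR_ge0.
have g1 : 0 <= gg d - 1 by rewrite subr_ge0 gg_ge1.
have n1 : 0 <= 1 - nu by rewrite subr_ge0.
have [bd|db] := leP b d.
  have C1 : 1 <= C by rewrite /C; case: ifP => _ //; exact: two_pow_ge1.
  have Pp : b `^ (1 - nu) <= d `^ (1 - nu).
    by apply: ge0_ler_powR; rewrite ?nnegrE.
  apply: (@le_trans _ _ (d `^ (1 - nu) * (gg d - 1) * expR (b `^ nu))); last first.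
    rewrite -!mulrA; apply: ler_peMl => //.
    by rewrite !mulr_ge0 ?powR_ge0 ?expR_ge0.
  have [ab|ba] := leP a b.
    rewrite distrC ger0_norm; last by rewrite subr_ge0 gg_mono.
    have h1 : gg b <= gg d by apply: gg_mono.
    have h2 := gg_ge1 a0.
    apply: (@le_trans _ _ ((gg d - 1) * d `^ (1 - nu))).
      apply: ler_pM => //; first by rewrite subr_ge0 gg_mono.
        exact: powR_ge0.
      lra.
    rewrite mulrC -mulrA ler_wpM2l ?powR_ge0//.
    exact: ler_peMr.
  have ba' : b < a by [].
  have dp : 0 < d by lra.
  rewrite ger0_norm; last by rewrite subr_ge0 gg_mono// ltW.
  have h := LA2 dp b0 bd.
  have h2 : gg a - gg b <= gg (d + b) - gg b by rewrite lerD2r gg_mono//.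
  apply: (@le_trans _ _ (((gg d - 1) * expR (b `^ nu)) * d `^ (1 - nu))).
    apply: ler_pM => //; first by rewrite subr_ge0 gg_mono// ltW.
      exact: powR_ge0.
    exact: le_trans h2 h.
  by apply: le_of_eq'; ring.
move: hm; rewrite ge_min => /orP[ad|bd']; last by have := lt_le_trans db bd'; rewrite ltxx.
have db' : d < b by [].
have ad' : a <= d by [].
have -> : C = 2 `^ (1 - nu) by rewrite /C ad' (ltW db').
have dp : 0 < d by lra.
have ab : a < b by lra.
rewrite distrC ger0_norm; last by rewrite subr_ge0 gg_mono// ltW.
set s := b - d.
have s0 : 0 <= s by rewrite /s; lra.
have sd : s <= d by rewrite /s; lra.
have sa : s <= a by rewrite /s; lra.
have sb : s <= b by rewrite /s; lra.
have e : d + s = b by rewrite /s addrC subrK.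
have h := LA2 dp s0 sd; rewrite e in h.
have h2 : gg b - gg a <= gg b - gg s by rewrite lerD2l lerN2 gg_mono.
have h3 : expR (s `^ nu) <= expR (b `^ nu).
  by rewrite ler_expR; apply: ge0_ler_powR; rewrite ?nnegrE// ltW.
have h4 : gg b - gg a <= (gg d - 1) * expR (b `^ nu).
  apply: le_trans h2 (le_trans h _); by rewrite ler_wpM2l.
have h5 : b `^ (1 - nu) <= 2 `^ (1 - nu) * d `^ (1 - nu).
  rewrite -powRM ?ler0n//.
  apply: ge0_ler_powR => //; rewrite ?nnegrE ?mulr_ge0 ?ler0n //; lra.
apply: (@le_trans _ _ (((gg d - 1) * expR (b `^ nu)) * (2 `^ (1 - nu) * d `^ (1 - nu)))).
  apply: ler_pM => //; first by rewrite subr_ge0 gg_mono// ltW.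
  exact: powR_ge0.
by apply: le_of_eq'; ring.
Qed.

Definition est1 (h : R -> R) (a b d : R) : Prop :=
  (h a <= h d * h b) /\
  (Num.min a b <= d -> h a <= h d * expR (b `^ nu)) /\
  (a <= b -> (h b - h a) * b `^ (1 - nu) <= d * h b) /\
  (`|h a - h b| * b `^ (1 - nu) <= d `^ (1 - nu) * h d * h b) /\
  (Num.min a d <= b ->
     `|h a - h b| * b `^ (1 - nu) <= d `^ (1 - nu) * (expR (d `^ nu) - 1) * h b) /\
  (Num.min a b <= d ->
     let C := if (a <= d) && (d <= b) then 2 `^ (1 - nu) else 1 in
     `|h a - h b| * b `^ (1 - nu)
       <= C * d `^ (1 - nu) * (h d - 1) * expR (b `^ nu)).

Lemma est_g (a b d : R) (a0 : 0 <= a) (b0 : 0 <= b) (d0 : 0 <= d) (t1 : a <= d + b) (t2 : b <= a + d) (t3 : d <= a + b) :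
  est1 gg a b d.
Proof.
split; first exact: E9.
split; first exact: E10.
split; first exact: E11.
split; first exact: E12.
split; first exact: E13.
exact: E14.
Qed.

Definition GG (x : R) := Num.max (gg x) (gg 1).

Lemma max_lip (u v c : R) : `|Num.max u c - Num.max v c| <= `|u - v|.
Proof.
have [uc|cu] := leP u c; have [vc|cv] := leP v c.
- by rewrite subrr normr0 normr_ge0.
- have uc' : u <= c by []. have cv' : c < v by [].
  rewrite (ler0_norm (_ : c - v <= 0)); last by lra.
  rewrite (ler0_norm (_ : u - v <= 0)); last by lra.
  lra.
- have cu' : c < u by []. have vc' : v <= c by [].
  rewrite (ger0_norm (_ : 0 <= u - c)); last by lra.
  rewrite (ger0_norm (_ : 0 <= u - v)); last by lra.
  lra.
- by [].
Qed.

Lemma GG_ge x : gg x <= GG x.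
Proof. by rewrite /GG le_max lexx. Qed.

Lemma GG_ge1 x : gg 1 <= GG x.
Proof. by rewrite /GG le_max lexx orbT. Qed.

Lemma GG_ge1' x : 1 <= GG x.
Proof. exact: le_trans (gg_ge1 ler01) (GG_ge1 x). Qed.

Lemma est_G (a b d : R) (a0 : 0 <= a) (b0 : 0 <= b) (d0 : 0 <= d) :
  est1 gg a b d -> est1 GG a b d.
Proof.
move=> [h9 [h10 [h11 [h12 [h13 h14]]]]].
have Gb0 : 0 <= GG b by exact: le_trans ler01 (GG_ge1' b).
have Gd0 : 0 <= GG d by exact: le_trans ler01 (GG_ge1' d).
have ga0 := gg_ge0 a0; have gb0 := gg_ge0 b0; have gd0 := gg_ge0 d0.
have Eb : 1 <= expR (b `^ nu) by rewrite -expR0 ler_expR powR_ge0.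
have lipab := max_lip (gg a) (gg b) (gg 1).
split.
  rewrite /GG ge_max; apply/andP; split.
    apply: le_trans h9 _; exact: ler_pM (GG_ge d) (GG_ge b).
  apply: le_trans (GG_ge1 d) _; exact: ler_peMr (GG_ge1' b).
split.
  move=> hm; rewrite /GG ge_max; apply/andP; split.
    apply: le_trans (h10 hm) _; rewrite ler_wpM2r ?expR_ge0//; exact: GG_ge.
  apply: le_trans (GG_ge1 d) _; exact: ler_peMr Eb.
split.
  move=> ab; apply: (@le_trans _ _ (d * gg b)); last by rewrite ler_wpM2l// GG_ge.
  apply: le_trans (h11 ab).
  rewrite ler_wpM2r ?powR_ge0//.
  have gab : gg a <= gg b by exact: gg_mono.
  apply: le_trans (ler_norm _) _.
  rewrite -[X in _ <= X](ger0_norm (_ : 0 <= gg b - gg a)) ?subr_ge0//.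
  by rewrite distrC [X in _ <= X]distrC; exact: lipab.
split.
  apply: le_trans (_ : _ <= `|gg a - gg b| * b `^ (1 - nu)) _.
    by rewrite ler_wpM2r ?powR_ge0.
  apply: le_trans h12 _.
  rewrite ler_pM ?mulr_ge0 ?powR_ge0 ?GG_ge//.
  by rewrite ler_wpM2l ?powR_ge0 ?GG_ge.
split.
  move=> hm; apply: le_trans (_ : _ <= `|gg a - gg b| * b `^ (1 - nu)) _.
    by rewrite ler_wpM2r ?powR_ge0.
  apply: le_trans (h13 hm) _.
  rewrite ler_wpM2l ?GG_ge// mulr_ge0 ?powR_ge0// subr_ge0 -expR0 ler_expR powR_ge0//.
move=> hm; have := h14 hm; cbv zeta.
set C := (if _ then _ else _) => h.
have C0 : 0 <= C by rewrite /C; case: ifP => _; [exact: powR_ge0 | exact: ler01].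
apply: le_trans (_ : _ <= `|gg a - gg b| * b `^ (1 - nu)) _.
  by rewrite ler_wpM2r ?powR_ge0.
apply: le_trans h _.
rewrite ler_wpM2r ?expR_ge0// ler_wpM2l ?mulr_ge0 ?powR_ge0//.
by rewrite lerD2r GG_ge.
Qed.
End G.

Section Vec.
Variable R : realType.

Lemma CS (n : nat) (x y : 'I_n -> R) :
  (\sum_i x i * y i) ^+ 2 <= (\sum_i x i ^+ 2) * (\sum_i y i ^+ 2).
Proof.
have h : 0 <= \sum_i \sum_j (x i * y j - x j * y i) ^+ 2.
  by apply: sumr_ge0 => i _; apply: sumr_ge0 => j _; exact: sqr_ge0.
have e1 : \sum_i \sum_j (x i * y j - x j * y i) ^+ 2 =
   \sum_i \sum_j (x i ^+ 2 * y j ^+ 2) + \sum_i \sum_j (x j ^+ 2 * y i ^+ 2)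
   - 2 * \sum_i \sum_j (x i * y i * (x j * y j)).
  rewrite mulr_sumr -big_split -sumrB /=; apply: eq_bigr => i _.
  rewrite mulr_sumr -big_split -sumrB /=; apply: eq_bigr => j _.
  ring.
have eA : \sum_i \sum_j (x i ^+ 2 * y j ^+ 2) = (\sum_i x i ^+ 2) * (\sum_i y i ^+ 2).
  by rewrite mulr_suml; apply: eq_bigr => i _; rewrite mulr_sumr.
have eB : \sum_i \sum_j (x j ^+ 2 * y i ^+ 2) = (\sum_i x i ^+ 2) * (\sum_i y i ^+ 2).
  by rewrite exchange_big /= eA.
have eC : \sum_i \sum_j (x i * y i * (x j * y j)) = (\sum_i x i * y i) ^+ 2.
  by rewrite expr2 mulr_suml; apply: eq_bigr => i _; rewrite mulr_sumr.
rewrite e1 eA eB eC in h.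
lra.
Qed.

Lemma enorm_ge0 n (x : 'rV[R]_n) : 0 <= enorm x.
Proof. exact: sqrtr_ge0. Qed.

Lemma enormN n (x : 'rV[R]_n) : enorm (- x) = enorm x.
Proof. by rewrite /enorm; congr Num.sqrt; apply: eq_bigr => i _; rewrite !mxE sqrrN. Qed.

Lemma enormD n (x y : 'rV[R]_n) : enorm (x + y) <= enorm x + enorm y.
Proof.
rewrite /enorm.
set X := \sum_(i < n) x ord0 i ^+ 2.
set Y := \sum_(i < n) y ord0 i ^+ 2.
set Z := \sum_(i < n) x ord0 i * y ord0 i.
have X0 : 0 <= X by apply: sumr_ge0 => i _; exact: sqr_ge0.
have Y0 : 0 <= Y by apply: sumr_ge0 => i _; exact: sqr_ge0.
have eS : \sum_(i < n) (x + y) ord0 i ^+ 2 = X + 2 * Z + Y.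
  rewrite /X /Y /Z mulr_sumr -!big_split /=; apply: eq_bigr => i _.
  rewrite !mxE; ring.
have hZ : Z <= Num.sqrt X * Num.sqrt Y.
  have [Zle|Zgt] := leP Z 0.
    exact: le_trans Zle (mulr_ge0 (sqrtr_ge0 _) (sqrtr_ge0 _)).
  rewrite -sqrtrM// -[Z](ger0_norm (ltW Zgt)) -sqrtr_sqr ler_sqrt ?mulr_ge0//.
  exact: CS.
rewrite eS -(@ler_pXn2r _ 2)// ?nnegrE ?addr_ge0 ?sqrtr_ge0//.
rewrite sqr_sqrtr; last by rewrite -eS; apply: sumr_ge0 => i _; exact: sqr_ge0.
rewrite sqrrD !sqr_sqrtr//.
lra.
Qed.

Lemma tri_vec n (xi eta : 'rV[R]_n) :
  let a := enorm xi in let b := enorm eta in let d := enorm (xi - eta) in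
  (0 <= a /\ 0 <= b /\ 0 <= d) /\ [/\ a <= d + b, b <= a + d & d <= a + b].
Proof.
move=> a b d; split; first by rewrite /a /b /d !enorm_ge0.
rewrite /a /b /d; split.
- by have := enormD (xi - eta) eta; rewrite subrK.
- by have := enormD xi (- (xi - eta)); rewrite enormN opprB subrKC.
- by have := enormD xi (- eta); rewrite enormN.
Qed.
End Vec.

Unset Implicit Arguments.
Theorem lemmaA2 (R : realType) (n : nat) (nu : R) (hnu0 : 0 < nu) (hnu1 : nu <= 1) :
  estimates_A nu (@ftilde R n nu) /\
  estimates_A nu (fun xi : 'rV[R]_n => Num.max (ftilde nu xi) (ftil nu 1)).
Proof.
split => xi eta; have [[a0 [b0 d0]] [t1 t2 t3]] := tri_vec xi eta.
  exact: (est_g hnu0 hnu1 a0 b0 d0 t1 t2 t3).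
exact: (est_G hnu0 hnu1 a0 b0 d0 (est_g hnu0 hnu1 a0 b0 d0 t1 t2 t3)).
Qed.
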